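(* Let $D\in(0,2)$ and let $\gamma$ satisfy $0<\gamma<2-D$. Let $u_1,u_2,\dots,u_j\in[0,1]$ be arbitrary. Define the SF-OGD sequence $\epsilon_1,\epsilon_2,\dots$ as follows: $\epsilon_1\in[-D-\gamma,\,D+\gamma]$, and for $\tau\ge 1$, with $E_\tau=D\cdot\mathrm{sign}(u_\tau-0.5)$, $$g_\tau=\nabla_\epsilon L(E_\tau,\epsilon_\tau)=-\begin{cases}0 & \text{if } E_\tau\epsilon_\tau>0 \text{ and } |\epsilon_\tau|>D,\\[2pt] \dfrac{u_\tau-0.5}{1+\epsilon_\tau(u_\tau-0.5)} & \text{otherwise,}\end{cases}$$ $$\epsilon_{\tau+1}=\epsilon_\tau-\gamma\,\frac{g_\tau}{\sqrt{\sum_{t=1}^{\tau} g_t^2}}$$ (the update term being $0$ when $g_\tau=0$). Then $\epsilon_\tau\in[-D-\gamma,\,D+\gamma]$ for all $1\le\tau\le j$.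
   Context: This is the scale-free online gradient descent (SF-OGD) scheme for learning a betting variable $\epsilon_\tau$ in the wealth process $S_\tau=S_{\tau-1}(1+\epsilon_\tau(u_\tau-0.5))$. The gradient $g_\tau$ is the (sub)gradient in $\epsilon$ of the clip-aware loss $L(E_\tau,\epsilon)=-\log(1+E_\tau(u_\tau-0.5))$ if $E_\tau\epsilon>0$ and $|\epsilon|>D$, and $L(E_\tau,\epsilon)=-\log(1+\epsilon(u_\tau-0.5))$ otherwise. *)

(* Defs.v *)
From Stdlib Require Import Reals.
Open Scope R_scope.

Definition sgn (x : R) : R :=
  if Rlt_dec 0 x then 1 else if Rlt_dec x 0 then -1 else 0.

Definition Ebet (D ut : R) : R := D * sgn (ut - / 2).

Definition grad (D ut e : R) : R :=
  if Rlt_dec 0 (Ebet D ut * e) then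
    (if Rlt_dec D (Rabs e) then 0 else - ((ut - / 2) / (1 + e * (ut - / 2))))
  else - ((ut - / 2) / (1 + e * (ut - / 2))).

(* sfogd_state D gamma u eps1 n = (eps_{n+1}, sum_{t=1}^{n} g_t^2) *)
Fixpoint sfogd_state (D gamma : R) (u : nat -> R) (eps1 : R) (n : nat) : R * R :=
  match n with
  | O => (eps1, 0)
  | S m =>
      let (e, s) := sfogd_state D gamma u eps1 m in
      let g := grad D (u (S m)) e in
      let s' := s + g ^ 2 in
      (if Req_EM_T g 0 then e else e - gamma * (g / sqrt s'), s')
  end.

(* eps_tau for tau >= 1 (eps 0 is a junk value equal to eps_1) *)
Definition sfogd_eps (D gamma : R) (u : nat -> R) (eps1 : R) (tau : nat) : R :=
  fst (sfogd_state D gamma u eps1 (tau - 1)).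

(* Main.v *)
Require Import Defs.
From Stdlib Require Import Reals Lra Lia.
Open Scope R_scope.

Lemma Ebet_pos D ut : 0 < ut - / 2 -> Ebet D ut = D.
Proof. intro h. unfold Ebet, sgn. destruct (Rlt_dec 0 (ut - /2)); [ring|lra]. Qed.

Lemma Ebet_neg D ut : ut - / 2 < 0 -> Ebet D ut = - D.
Proof. intro h. unfold Ebet, sgn. destruct (Rlt_dec 0 (ut - /2)); [lra|].
  destruct (Rlt_dec (ut - /2) 0); [ring|lra]. Qed.

Lemma unclipped_sign a e : 0 < 1 + e * a ->
  (a <= 0 -> 0 <= - (a / (1 + e * a))) /\ (0 <= a -> - (a / (1 + e * a)) <= 0).
Proof.
  intro hd. pose proof (Rinv_0_lt_compat _ hd) as hi. unfold Rdiv. split; intro h.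
  - replace (- (a * / (1 + e * a))) with ((-a) * / (1 + e*a)) by ring.
    apply Rmult_le_pos; lra.
  - replace (- (a * / (1 + e * a))) with (- (a * / (1 + e*a))) by ring.
    assert (0 <= a * / (1 + e * a)) by (apply Rmult_le_pos; lra). lra.
Qed.

Lemma grad_sign D gamma ut e : 0 < D -> 0 < gamma -> gamma < 2 - D ->
  0 <= ut <= 1 -> - D - gamma <= e <= D + gamma ->
  (D < e -> 0 <= grad D ut e) /\ (e < - D -> grad D ut e <= 0).
Proof.
  intros hD hg hg2 hu he.
  assert (hden : 0 < 1 + e * (ut - /2)).
  { assert (Rabs (e * (ut - /2)) < 1).
    { rewrite Rabs_mult. assert (Rabs e <= D + gamma) by (apply Rabs_le; lra).
      assert (Rabs (ut - /2) <= /2) by (apply Rabs_le; lra).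
      assert (0 <= Rabs e) by apply Rabs_pos.
      assert (0 <= Rabs (ut - /2)) by apply Rabs_pos.
      nra. }
    apply Rabs_def2 in H. lra. }
  destruct (unclipped_sign (ut - /2) e hden) as [s1 s2].
  unfold grad. split; intro hde.
  - destruct (Rlt_dec 0 (Ebet D ut * e)) as [h1|h1].
    + destruct (Rlt_dec D (Rabs e)) as [h2|h2]; [lra|].
      exfalso. apply h2. rewrite Rabs_right; lra.
    + apply s1. destruct (Rle_dec (ut - /2) 0); auto.
      exfalso. apply h1. rewrite Ebet_pos by lra. nra.
  - destruct (Rlt_dec 0 (Ebet D ut * e)) as [h1|h1].
    + destruct (Rlt_dec D (Rabs e)) as [h2|h2]; [lra|].
      exfalso. apply h2. rewrite Rabs_left; lra.
    + apply s2. destruct (Rle_dec 0 (ut - /2)); auto.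
      exfalso. apply h1. rewrite Ebet_neg by lra. nra.
Qed.


Lemma q_bound g s : g <> 0 -> 0 <= s ->
  -1 <= g / sqrt (s + g ^ 2) <= 1 /\
  (0 <= g -> 0 <= g / sqrt (s + g ^ 2)) /\ (g <= 0 -> g / sqrt (s + g ^ 2) <= 0).
Proof.
  intros hg hs.
  assert (hg2 : 0 < g ^ 2) by (simpl; rewrite Rmult_1_r; apply Rsqr_pos_lt; auto).
  assert (hsq : Rabs g <= sqrt (s + g ^ 2)).
  { rewrite <- sqrt_Rsqr_abs. apply sqrt_le_1_alt. unfold Rsqr. simpl in *. lra. }
  assert (hpos : 0 < sqrt (s + g ^ 2)) by (apply sqrt_lt_R0; lra).
  assert (ha : 0 < Rabs g) by (apply Rabs_pos_lt; auto).
  set (r := sqrt (s + g ^ 2)) in *.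
  unfold Rdiv. pose proof (Rinv_0_lt_compat _ hpos).
  split; [|split; intro h].
  - assert (Rabs (g * / r) <= 1).
    { rewrite Rabs_mult, Rabs_inv, (Rabs_right r) by lra.
      apply (Rmult_le_reg_r r); auto. rewrite Rmult_assoc, Rinv_l by lra. lra. }
    pose proof (Rle_abs (g * / r)). pose proof (Rle_abs (- (g * / r))). rewrite Rabs_Ropp in H2. lra.
  - apply Rmult_le_pos; lra.
  - assert (0 <= (-g) * / r) by (apply Rmult_le_pos; lra). lra.
Qed.

Lemma step D gamma ut e s : 0 < D -> 0 < gamma -> gamma < 2 - D ->
  0 <= ut <= 1 -> - D - gamma <= e <= D + gamma -> 0 <= s ->
  let g := grad D ut e in
  - D - gamma <= (if Req_EM_T g 0 then e else e - gamma * (g / sqrt (s + g ^ 2)))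
    <= D + gamma.
Proof.
  intros hD hg hg2 hu he hs g.
  destruct (Req_EM_T g 0) as [h|h]; [lra|].
  destruct (grad_sign D gamma ut e hD hg hg2 hu he) as [a b].
  destruct (q_bound g s h hs) as [[q1 q2] [q3 q4]].
  set (q := g / sqrt (s + g ^ 2)) in *.
  destruct (Rlt_dec D e) as [h1|h1].
  - specialize (q3 (a h1)). nra.
  - destruct (Rlt_dec e (-D)) as [h2|h2].
    + specialize (q4 (b h2)). nra.
    + nra.
Qed.

Lemma inv D gamma j u eps1 : 0 < D -> D < 2 -> 0 < gamma -> gamma < 2 - D ->
  (forall t : nat, (1 <= t <= j)%nat -> 0 <= u t <= 1) ->
  - D - gamma <= eps1 <= D + gamma ->
  forall n, (n <= j)%nat ->
  - D - gamma <= fst (sfogd_state D gamma u eps1 n) <= D + gamma /\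
  0 <= snd (sfogd_state D gamma u eps1 n).
Proof.
  intros hD hD2 hg hg2 hu he. induction n as [|n IH]; intro hn.
  - simpl. lra.
  - destruct IH as [IH1 IH2]; [lia|]. simpl.
    destruct (sfogd_state D gamma u eps1 n) as [e s]. simpl in *.
    split.
    + apply step; auto. apply hu. lia.
    + pose proof (pow2_ge_0 (grad D (u (S n)) e)). lra.
Qed.

Theorem lemma1 (D gamma : R) (j : nat) (u : nat -> R) (eps1 : R) :
  0 < D -> D < 2 -> 0 < gamma -> gamma < 2 - D ->
  (forall t : nat, (1 <= t <= j)%nat -> 0 <= u t <= 1) ->
  - D - gamma <= eps1 <= D + gamma ->
  forall tau : nat, (1 <= tau <= j)%nat ->
    - D - gamma <= sfogd_eps D gamma u eps1 tau <= D + gamma.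
Proof.
  intros hD hD2 hg hg2 hu he tau ht. unfold sfogd_eps.
  apply (inv D gamma j u eps1); auto. lia.
Qed.
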